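(* Let $s,t,p\ge 1$, $A,B\in GL(n)$ and $Q\in\mathcal{P}(n)$. The equation $X^s+A^*X^{-t}A+B^*X^{-p}B=Q$ has a Hermitian positive definite solution if and only if $A$ and $B$ can be factored as $$A=(U\Lambda U^* )^{\frac{t}{2s}}N_1,\qquad B=(U\Lambda U^* )^{\frac{p}{2s}}N_2,$$ where $U$ is an $n\times n$ unitary matrix, $\Lambda$ is an $n\times n$ diagonal matrix with positive diagonal entries, $N_1,N_2$ are $n\times n$ matrices, and the $3n\times n$ matrix $$\begin{pmatrix}\Lambda^{1/2}U^*Q^{-1/2}\\ N_1Q^{-1/2}\\ N_2Q^{-1/2}\end{pmatrix}$$ is column orthonormal (i.e. $M^*M=I_n$ for this matrix $M$).
   Context: $GL(n)$: $n\times n$ complex nonsingular matrices; $\mathcal{P}(n)$: $n\times n$ Hermitian positive definite matrices. Real powers of positive definite matrices are defined by functional calculus. *)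

(* Defs.v *)
(* complex numbers built on Stdlib reals; n x n complex
   matrices represented as functions nat -> nat -> C, only entries with
   indices < n are meaningful (equality is [meq n]). *)
From Stdlib Require Import Reals Lra ClassicalEpsilon.
Open Scope R_scope.

Record C : Type := mkC { re : R; im : R }.

Definition C0 : C := mkC 0 0.
Definition C1 : C := mkC 1 0.
Definition RtoC (x : R) : C := mkC x 0.
Definition Cadd (a b : C) : C := mkC (re a + re b) (im a + im b).
Definition Cmul (a b : C) : C :=
  mkC (re a * re b - im a * im b) (re a * im b + im a * re b).
Definition Cconj (a : C) : C := mkC (re a) (- im a).

Fixpoint csum (n : nat) (f : nat -> C) : C :=
  match n with
  | O => C0
  | S k => Cadd (csum k f) (f k)
  end.

Definition Mat := nat -> nat -> C.

Definition meq (n : nat) (A B : Mat) : Prop :=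
  forall i j, (i < n)%nat -> (j < n)%nat -> A i j = B i j.

Definition mmul (m : nat) (A B : Mat) : Mat :=
  fun i j => csum m (fun k => Cmul (A i k) (B k j)).
Definition madd (A B : Mat) : Mat := fun i j => Cadd (A i j) (B i j).
Definition madj (A : Mat) : Mat := fun i j => Cconj (A j i).
Definition mid : Mat := fun i j => if Nat.eqb i j then C1 else C0.
Definition mdiag (d : nat -> R) : Mat :=
  fun i j => if Nat.eqb i j then RtoC (d i) else C0.

Definition invertible (n : nat) (A : Mat) : Prop :=
  exists B, meq n (mmul n A B) mid /\ meq n (mmul n B A) mid.
Definition unitary (n : nat) (U : Mat) : Prop :=
  meq n (mmul n (madj U) U) mid /\ meq n (mmul n U (madj U)) mid.
Definition hermitian (n : nat) (X : Mat) : Prop := meq n (madj X) X.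
Definition posdef (n : nat) (X : Mat) : Prop :=
  hermitian n X /\
  forall v : nat -> C, (exists i, (i < n)%nat /\ v i <> C0) ->
    0 < re (csum n (fun i => csum n (fun j =>
                Cmul (Cmul (Cconj (v i)) (X i j)) (v j)))).

(* Real power of a positive definite matrix by functional calculus:
   if X = U diag(l) U^* with U unitary and l > 0, then
   X^r = U diag(l^r) U^*.  (Chosen by epsilon; well defined on P(n).) *)
Definition mpow (n : nat) (X : Mat) (r : R) : Mat :=
  epsilon (inhabits mid) (fun Y => exists (U : Mat) (l : nat -> R),
     unitary n U /\ (forall i, (i < n)%nat -> 0 < l i) /\
     meq n X (mmul n (mmul n U (mdiag l)) (madj U)) /\
     Y = mmul n (mmul n U (mdiag (fun i => Rpower (l i) r))) (madj U)).

Definition stack3 (n : nat) (X Y Z : Mat) : Mat :=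
  fun i j => if Nat.ltb i n then X i j
             else if Nat.ltb i (2 * n) then Y (i - n)%nat j
             else Z (i - 2 * n)%nat j.

Definition col_orthonormal (m n : nat) (M : Mat) : Prop :=
  meq n (mmul m (madj M) M) mid.

(* Main.v *)
Require Import Defs.
From Stdlib Require Import Reals Lra Lia ClassicalEpsilon FunctionalExtensionality PropExtensionality Setoid Morphisms.
Open Scope R_scope.
Import Defs.

Lemma Ceq (a b : C) : re a = re b -> im a = im b -> a = b.
Proof. destruct a, b; simpl; intros; subst; reflexivity. Qed.

Ltac cring := apply Ceq; unfold Cadd, Cmul, Cconj, RtoC, C0, C1; simpl; ring.

Lemma csum_ext n f g : (forall k, (k < n)%nat -> f k = g k) -> csum n f = csum n g.
Proof. induction n; simpl; intros H; auto. rewrite IHn by (intros; apply H; lia). rewrite H by lia. auto. Qed.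

Lemma csum_add n f g : csum n (fun k => Cadd (f k) (g k)) = Cadd (csum n f) (csum n g).
Proof. induction n; simpl. cring. rewrite IHn. cring. Qed.

Lemma csum_mull n c f : Cmul c (csum n f) = csum n (fun k => Cmul c (f k)).
Proof. induction n; simpl. cring. rewrite <- IHn. cring. Qed.

Lemma csum_mulr n c f : Cmul (csum n f) c = csum n (fun k => Cmul (f k) c).
Proof. induction n; simpl. cring. rewrite <- IHn. cring. Qed.

Lemma csum_conj n f : Cconj (csum n f) = csum n (fun k => Cconj (f k)).
Proof. induction n; simpl. cring. rewrite <- IHn. cring. Qed.

Lemma csum_swap n m f : csum n (fun i => csum m (fun j => f i j)) = csum m (fun j => csum n (fun i => f i j)).
Proof. induction n; simpl.
- induction m; simpl. auto. rewrite <- IHm. cring.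
- rewrite IHn. rewrite <- csum_add. auto. Qed.

Lemma csum_zero n f : (forall k, (k < n)%nat -> f k = C0) -> csum n f = C0.
Proof. induction n; simpl; intros H; auto. rewrite IHn by (intros; apply H; lia). rewrite H by lia. cring. Qed.

Lemma csum_delta n f j : (j < n)%nat -> (forall k, (k < n)%nat -> k <> j -> f k = C0) -> csum n f = f j.
Proof. induction n; simpl; intros Hj H. lia.
  destruct (Nat.eq_dec j n).
  - subst. rewrite csum_zero. cring. intros; apply H; lia.
  - rewrite IHn by (try lia; intros; apply H; lia). rewrite (H n) by lia. cring. Qed.

Lemma csum_split a b f : csum (a + b) f = Cadd (csum a f) (csum b (fun k => f (a + k)%nat)).
Proof. induction b; simpl. rewrite Nat.add_0_r. cring.
  rewrite Nat.add_succ_r. simpl. rewrite IHb. cring. Qed.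

Lemma mmul_assoc n A B D : mmul n (mmul n A B) D = mmul n A (mmul n B D).
Proof. unfold mmul. apply functional_extensionality; intro i; apply functional_extensionality; intro j.
  transitivity (csum n (fun k => csum n (fun l => Cmul (A i l) (Cmul (B l k) (D k j))))).
  - apply csum_ext; intros. rewrite csum_mulr. apply csum_ext; intros. cring.
  - rewrite csum_swap. apply csum_ext; intros. rewrite csum_mull. auto. Qed.

Lemma madj_mmul n A B : madj (mmul n A B) = mmul n (madj B) (madj A).
Proof. unfold madj, mmul. apply functional_extensionality; intro i; apply functional_extensionality; intro j.
  rewrite csum_conj. apply csum_ext; intros. cring. Qed.

Lemma madj_madj A : madj (madj A) = A.
Proof. unfold madj. apply functional_extensionality; intro i; apply functional_extensionality; intro j. cring. Qed.

Lemma madj_madd A B : madj (madd A B) = madd (madj A) (madj B).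
Proof. unfold madj, madd. apply functional_extensionality; intro i; apply functional_extensionality; intro j. cring. Qed.

Lemma mmul_madd_l n A B D : mmul n (madd A B) D = madd (mmul n A D) (mmul n B D).
Proof. unfold madd, mmul. apply functional_extensionality; intro i; apply functional_extensionality; intro j.
  rewrite <- csum_add. apply csum_ext; intros. cring. Qed.

Lemma mmul_madd_r n A B D : mmul n D (madd A B) = madd (mmul n D A) (mmul n D B).
Proof. unfold madd, mmul. apply functional_extensionality; intro i; apply functional_extensionality; intro j.
  rewrite <- csum_add. apply csum_ext; intros. cring. Qed.

Lemma madj_mdiag d : madj (mdiag d) = mdiag d.
Proof. unfold madj, mdiag. apply functional_extensionality; intro i; apply functional_extensionality; intro j.
  destruct (Nat.eqb_spec j i); destruct (Nat.eqb_spec i j); subst; try lia; cring. Qed.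

Lemma mdiag_one : mdiag (fun _ => 1) = mid.
Proof. unfold mid, mdiag. apply functional_extensionality; intro i; apply functional_extensionality; intro j.
  destruct (Nat.eqb i j); cring. Qed.

Global Instance meq_equiv n : Equivalence (meq n).
Proof. split; unfold meq; intros A; intros; auto.
  rewrite H; auto. rewrite H, H0; auto. Qed.

Global Instance mmul_proper n : Proper (meq n ==> meq n ==> meq n) (mmul n).
Proof. intros A A' HA B B' HB i j Hi Hj. unfold mmul. apply csum_ext; intros. rewrite HA, HB; auto. Qed.

Global Instance madd_proper n : Proper (meq n ==> meq n ==> meq n) madd.
Proof. intros A A' HA B B' HB i j Hi Hj. unfold madd. rewrite HA, HB; auto. Qed.

Global Instance madj_proper n : Proper (meq n ==> meq n) madj.
Proof. intros A A' HA i j Hi Hj. unfold madj. rewrite HA; auto. Qed.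

Lemma meq_refl' n A B : A = B -> meq n A B.
Proof. intros ->; reflexivity. Qed.

Lemma mmul_mid_l n A : meq n (mmul n mid A) A.
Proof. intros i j Hi Hj. unfold mmul, mid. rewrite (csum_delta n _ i Hi).
  rewrite Nat.eqb_refl. cring. intros k Hk Hki. destruct (Nat.eqb_spec i k). lia. cring. Qed.

Lemma mmul_mid_r n A : meq n (mmul n A mid) A.
Proof. intros i j Hi Hj. unfold mmul, mid. rewrite (csum_delta n _ j Hj).
  rewrite Nat.eqb_refl. cring. intros k Hk Hki. destruct (Nat.eqb_spec k j). lia. cring. Qed.

Lemma mmul_diag_r n A d i j : (j < n)%nat -> mmul n A (mdiag d) i j = Cmul (A i j) (RtoC (d j)).
Proof. intros Hj. unfold mmul, mdiag. rewrite (csum_delta n _ j Hj).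
  rewrite Nat.eqb_refl. auto. intros k Hk Hki. destruct (Nat.eqb_spec k j). lia. cring. Qed.

Lemma mmul_diag_l n A d i j : (i < n)%nat -> mmul n (mdiag d) A i j = Cmul (RtoC (d i)) (A i j).
Proof. intros Hi. unfold mmul, mdiag. rewrite (csum_delta n _ i Hi).
  rewrite Nat.eqb_refl. auto. intros k Hk Hki. destruct (Nat.eqb_spec i k). lia. cring. Qed.

Lemma mdiag_mul n a b : meq n (mmul n (mdiag a) (mdiag b)) (mdiag (fun i => a i * b i)).
Proof. intros i j Hi Hj. rewrite mmul_diag_r by auto. unfold mdiag.
  destruct (Nat.eqb_spec i j). subst. cring. cring. Qed.

Lemma mdiag_ext n a b : (forall i, (i < n)%nat -> a i = b i) -> meq n (mdiag a) (mdiag b).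
Proof. intros H i j Hi Hj. unfold mdiag. rewrite H by auto. auto. Qed.

Definition UDU n U d := mmul n (mmul n U (mdiag d)) (madj U).

Lemma UDU_adj n U d : madj (UDU n U d) = UDU n U d.
Proof. unfold UDU. rewrite !madj_mmul, madj_madj, madj_mdiag, mmul_assoc. auto. Qed.

Lemma UDU_mul n U a b : unitary n U -> meq n (mmul n (UDU n U a) (UDU n U b)) (UDU n U (fun i => a i * b i)).
Proof. intros [HU1 HU2]. unfold UDU.
  rewrite !mmul_assoc. rewrite <- (mmul_assoc n (madj U) U).
  rewrite HU1, mmul_mid_l. rewrite <- (mmul_assoc n (mdiag a)). rewrite mdiag_mul. reflexivity. Qed.

Lemma UDU_ext n U a b : (forall i, (i < n)%nat -> a i = b i) -> meq n (UDU n U a) (UDU n U b).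
Proof. intros H. unfold UDU. rewrite (mdiag_ext n a b H). reflexivity. Qed.

Lemma UDU_one n U a : unitary n U -> (forall i, (i < n)%nat -> a i = 1) -> meq n (UDU n U a) mid.
Proof. intros [HU1 HU2] H. rewrite (UDU_ext n U a (fun _ => 1) H). unfold UDU. rewrite mdiag_one.
  rewrite mmul_mid_r. auto. Qed.

Lemma UDU_unique n U V l m (f : R -> R) : unitary n U -> unitary n V ->
  meq n (UDU n U l) (UDU n V m) -> meq n (UDU n U (fun i => f (l i))) (UDU n V (fun i => f (m i))).
Proof. intros [HU1 HU2] [HV1 HV2] H.
  set (W := mmul n (madj V) U).
  assert (HW : meq n (mmul n W (mdiag l)) (mmul n (mdiag m) W)).
  { unfold W. transitivity (mmul n (madj V) (mmul n (UDU n U l) U)).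
    - unfold UDU. rewrite !mmul_assoc. rewrite HU1, mmul_mid_r. reflexivity.
    - rewrite H. unfold UDU. rewrite <- !mmul_assoc. rewrite HV1, mmul_mid_l. reflexivity. }
  assert (HWf : meq n (mmul n W (mdiag (fun i => f (l i)))) (mmul n (mdiag (fun i => f (m i))) W)).
  { intros i j Hi Hj. specialize (HW i j Hi Hj). rewrite mmul_diag_r, mmul_diag_l in * by auto.
    destruct (Req_dec (l j) (m i)) as [E|E].
    - rewrite E. cring.
    - assert (W i j = C0).
      { apply Ceq; unfold Cmul, RtoC in HW; simpl in HW; injection HW; intros h1 h2; simpl.
        + apply Rmult_eq_reg_r with (l j - m i). ring_simplify. lra. lra.
        + apply Rmult_eq_reg_r with (l j - m i). ring_simplify. lra. lra. }
      rewrite H0. cring. }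
  transitivity (mmul n (mmul n (mmul n V W) (mdiag (fun i => f (l i)))) (madj U)).
  - unfold W, UDU. rewrite <- (mmul_assoc n V). rewrite HV2, mmul_mid_l. reflexivity.
  - rewrite (mmul_assoc n V W), HWf. unfold W, UDU. rewrite !mmul_assoc. rewrite HU2, mmul_mid_r. reflexivity.
Qed.

Lemma mpow_spec n X r U l : unitary n U -> (forall i, (i < n)%nat -> 0 < l i) ->
  meq n X (UDU n U l) -> meq n (mpow n X r) (UDU n U (fun i => Rpower (l i) r)).
Proof. intros HU Hl HX. unfold mpow.
  match goal with |- meq n (epsilon ?i ?P) _ => destruct (epsilon_spec i P) as (V & m & HV & Hm & HXm & ->) end.
  - exists (UDU n U (fun i => Rpower (l i) r)), U, l. repeat split; auto; apply HU.
  - symmetry. apply (UDU_unique n U V l m (fun x => Rpower x r)); auto. rewrite <- HX. exact HXm.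
Qed.

From mathcomp Require ssreflect ssrfun ssrbool eqtype ssrnat seq fintype bigop ssralg ssrnum matrix sesquilinear spectral Rstruct.
From mathcomp.real_closed Require complex.

Module Spec.
Import ssreflect ssrfun ssrbool eqtype ssrnat seq fintype bigop ssralg ssrnum matrix sesquilinear spectral Rstruct mathcomp.real_closed.complex.
Import GRing.Theory Num.Theory.
Local Open Scope ring_scope.
Local Open Scope sesquilinear_scope.

Notation CC := (complex Rdefinitions.R).
Definition toCC (c : Defs.C) : CC := Complex (re c) (im c).
Definition ofCC (z : CC) : Defs.C := mkC (complex.Re z) (complex.Im z).

Lemma ofCC_add x y : ofCC (x + y) = Cadd (ofCC x) (ofCC y).
Proof. by case: x; case: y. Qed.
Lemma ofCC_mul x y : ofCC (x * y) = Cmul (ofCC x) (ofCC y).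
Proof. by case: x; case: y. Qed.
Lemma ofCC_conj x : ofCC (x^*)%C = Cconj (ofCC x).
Proof. by case: x. Qed.
Lemma ofCC_0 : ofCC 0 = C0. Proof. by []. Qed.
Lemma ofCC_1 : ofCC 1 = C1. Proof. by []. Qed.
Lemma ofCC_toCC c : ofCC (toCC c) = c. Proof. by case: c. Qed.

Lemma ofCC_sum n (F : nat -> CC) : ofCC (\sum_(k < n) F k) = csum n (fun k => ofCC (F k)).
Proof. elim: n => [|n IH]. by rewrite big_ord0. by rewrite big_ord_recr /= ofCC_add IH. Qed.

Section Transfer.
Variable m : nat.
Local Notation n := m.+1.

Definition ofM (M : 'M[CC]_n) : Mat := fun i j => ofCC (M (inord i) (inord j)).

Lemma ofM_mul (A B : 'M[CC]_n) : meq n (ofM (A *m B)) (mmul n (ofM A) (ofM B)).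
Proof.
move=> i j _ _; rewrite /ofM mxE /mmul.
rewrite (eq_bigr (fun k : 'I_n => A (inord i) (inord k) * B (inord k) (inord j))); last by move=> k _; rewrite inord_val.
by rewrite (ofCC_sum n (fun k => A (inord i) (inord k) * B (inord k) (inord j))); apply: csum_ext => k _; rewrite ofCC_mul.
Qed.

Lemma ofM_1 : meq n (ofM 1%:M) mid.
Proof.
move=> i j /ssrnat.ltP Hi /ssrnat.ltP Hj; rewrite /ofM /mid mxE.
have -> : (inord i == inord j :> 'I_n) = Nat.eqb i j.
  apply/eqP/PeanoNat.Nat.eqb_spec.
  by move=> /(congr1 val); rewrite /= !inordK.
  by move=> ->.
by case: (Nat.eqb i j).
Qed.

Lemma ofM_adj (A : 'M[CC]_n) : ofM (A ^t*) = madj (ofM A).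
Proof.
apply: functional_extensionality => i; apply: functional_extensionality => j.
by rewrite /ofM /madj !mxE ofCC_conj.
Qed.


Lemma ofM_diag (d : 'rV[CC]_n) : d \is a mxOver Num.real ->
  meq n (ofM (diag_mx d)) (mdiag (fun i => complex.Re (d ord0 (inord i)))).
Proof.
move=> /mxOverP Hd i j /ssrnat.ltP Hi /ssrnat.ltP Hj; rewrite /ofM /mdiag mxE.
have -> : (inord i == inord j :> 'I_n) = Nat.eqb i j.
  apply/eqP/PeanoNat.Nat.eqb_spec.
  by move=> /(congr1 val); rewrite /= !inordK.
  by move=> ->.
case: (Nat.eqb i j); last by [].
have := Hd ord0 (inord i); case: (d ord0 (inord i)) => a b; rewrite complex_real => /eqP -> /=.
by rewrite /ofCC /RtoC /=.
Qed.

Lemma herm_spectral_S (X : Mat) : Defs.hermitian n X ->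
  exists U l, unitary n U /\ meq n X (UDU n U l).
Proof.
move=> HX.
pose M : 'M[CC]_n := \matrix_(i, j) toCC (X i j).
have HM : M \is hermsymmx.
  rewrite is_hermitianmxE expr0 scale1r; apply/eqP/matrixP => i j; rewrite !mxE.
  have := HX i j (ssrnat.ltP (ltn_ord i)) (ssrnat.ltP (ltn_ord j)); rewrite /madj => <-.
  by case: (X j i).
have HPu : spectralmx M \is unitarymx := spectral_unitarymx M.
have /orthomx_spectralP Hdec := hermitian_normalmx HM.
rewrite invmx_unitary // in Hdec.
have Hreal := hermitian_spectral_diag_real HM.
set P := spectralmx M in HPu Hdec; set sp := spectral_diag M in Hdec Hreal.
have HadjU : madj (ofM (P ^t*)) = ofM P by rewrite -ofM_adj trmxCK.
exists (ofM (P ^t*)), (fun i => complex.Re (sp ord0 (inord i))); split; [split|].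
- rewrite HadjU -ofM_mul; move/unitarymxP: HPu => ->; exact: ofM_1.
- rewrite HadjU -ofM_mul -invmx_unitary // mulVmx; last exact: unitarymx_unit.
  exact: ofM_1.
- have HXM : meq n X (ofM M).
    move=> i j /ssrnat.ltP Hi /ssrnat.ltP Hj; rewrite /ofM mxE !inordK //.
    by rewrite ofCC_toCC.
  rewrite HXM Hdec /UDU HadjU !ofM_mul ofM_diag //; reflexivity.
Qed.

End Transfer.
End Spec.

Lemma herm_spectral n (X : Mat) : hermitian n X ->
  exists U l, unitary n U /\ meq n X (UDU n U l).
Proof.
destruct n as [|m].
- intros _. exists mid, (fun _ => 0%R). split; [split|]; intros i j Hi; lia.
- apply Spec.herm_spectral_S.
Qed.

Import Defs.
Open Scope R_scope.

Definition qsum n X (v : nat -> C) :=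
  csum n (fun i => csum n (fun j => Cmul (Cmul (Cconj (v i)) (X i j)) (v j))).

Lemma UDU_entry n U d i j : UDU n U d i j = csum n (fun k => Cmul (Cmul (U i k) (RtoC (d k))) (Cconj (U j k))).
Proof. unfold UDU at 1. unfold mmul at 1. apply csum_ext; intros k Hk. rewrite mmul_diag_r by auto. reflexivity. Qed.

Lemma qsum_UDU n U d v : qsum n (UDU n U d) v =
  csum n (fun k => Cmul (RtoC (d k)) (Cmul (Cconj (csum n (fun j => Cmul (Cconj (U j k)) (v j))))
                                          (csum n (fun j => Cmul (Cconj (U j k)) (v j))))).
Proof. unfold qsum.
  transitivity (csum n (fun i => csum n (fun j => csum n (fun k =>
     Cmul (Cmul (Cconj (v i)) (U i k)) (Cmul (RtoC (d k)) (Cmul (Cconj (U j k)) (v j))))))).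
  { apply csum_ext; intros i _; apply csum_ext; intros j _. rewrite UDU_entry, csum_mull, csum_mulr.
    apply csum_ext; intros; cring. }
  transitivity (csum n (fun i => csum n (fun k => csum n (fun j =>
     Cmul (Cmul (Cconj (v i)) (U i k)) (Cmul (RtoC (d k)) (Cmul (Cconj (U j k)) (v j))))))).
  { apply csum_ext; intros i _. apply csum_swap. }
  rewrite csum_swap. apply csum_ext; intros k _.
  rewrite csum_conj, csum_mulr, csum_mull. apply csum_ext; intros i _.
  rewrite csum_mull, csum_mull. apply csum_ext; intros j _. cring.
Qed.

Lemma re_csum_nonneg n f : (forall k, (k < n)%nat -> 0 <= re (f k)) -> 0 <= re (csum n f).
Proof. induction n; simpl; intros H. lra. assert (0 <= re (csum n f)) by (apply IHn; intros; apply H; lia).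
  assert (0 <= re (f n)) by (apply H; lia). lra. Qed.

Lemma re_csum_pos n f : (forall k, (k < n)%nat -> 0 <= re (f k)) -> (exists k, (k < n)%nat /\ 0 < re (f k)) ->
  0 < re (csum n f).
Proof. induction n; simpl; intros H [k [Hk Hp]]. lia.
  assert (0 <= re (f n)) by (apply H; lia).
  destruct (Nat.eq_dec k n). subst. assert (0 <= re (csum n f)) by (apply re_csum_nonneg; intros; apply H; lia). lra.
  assert (0 < re (csum n f)) by (apply IHn; [intros; apply H; lia | exists k; split; [lia|auto]]). lra. Qed.

Lemma re_sq_term d w : 0 <= d -> 0 <= re (Cmul (RtoC d) (Cmul (Cconj w) w)).
Proof. intros. unfold Cmul, RtoC, Cconj; simpl. nra. Qed.

Lemma re_sq_term_pos d w : 0 < d -> w <> C0 -> 0 < re (Cmul (RtoC d) (Cmul (Cconj w) w)).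
Proof. intros Hd Hw. unfold Cmul, RtoC, Cconj; simpl. destruct w as [a b]; simpl.
  assert (a <> 0 \/ b <> 0). { destruct (Req_dec a 0); [destruct (Req_dec b 0); [subst; exfalso; apply Hw; reflexivity | right; auto] | left; auto]. }
  destruct H as [H|H]; [pose proof (Rsqr_pos_lt a H) | pose proof (Rsqr_pos_lt b H)]; unfold Rsqr in *; nra. Qed.

Lemma UDU_posdef n U d : unitary n U -> (forall i, (i < n)%nat -> 0 < d i) -> posdef n (UDU n U d).
Proof. intros HU Hd. split.
  - unfold hermitian. rewrite UDU_adj. reflexivity.
  - intros v [i [Hi Hv]]. fold (qsum n (UDU n U d) v). rewrite qsum_UDU.
    set (w := fun k => csum n (fun j => Cmul (Cconj (U j k)) (v j))).
    assert (exists k, (k < n)%nat /\ w k <> C0).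
    { apply Classical_Prop.NNPP; intros Hn. apply Hv.
      assert (Hw : forall k, (k < n)%nat -> w k = C0).
      { intros k Hk. apply Classical_Prop.NNPP; intros Hk2. apply Hn. exists k; auto. }
      transitivity (csum n (fun k => Cmul (U i k) (w k))).
      - unfold w. transitivity (csum n (fun j => Cmul (mmul n U (madj U) i j) (v j))).
        + destruct HU as [_ HU2]. rewrite (csum_delta n _ i Hi).
          * rewrite HU2 by auto. unfold mid. rewrite Nat.eqb_refl. cring.
          * intros k Hk Hki. rewrite HU2 by auto. unfold mid. destruct (Nat.eqb_spec i k). lia. cring.
        + unfold mmul, madj. transitivity (csum n (fun j => csum n (fun k => Cmul (U i k) (Cmul (Cconj (U j k)) (v j))))).
          * apply csum_ext; intros j _. rewrite csum_mulr. apply csum_ext; intros. cring.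
          * rewrite csum_swap. apply csum_ext; intros k _. rewrite csum_mull. reflexivity.
      - apply csum_zero. intros k Hk. rewrite Hw by auto. cring. }
    destruct H as [k [Hk Hwk]].
    apply re_csum_pos.
    + intros; apply re_sq_term. apply Rlt_le, Hd; auto.
    + exists k. split; auto. apply re_sq_term_pos; auto.
Qed.

Lemma qsum_meq n X Y v : meq n X Y -> qsum n X v = qsum n Y v.
Proof. intros H. unfold qsum. apply csum_ext; intros i Hi; apply csum_ext; intros j Hj. rewrite H; auto. Qed.

Lemma posdef_spectral n X : posdef n X -> exists U l, unitary n U /\ (forall i, (i < n)%nat -> 0 < l i) /\ meq n X (UDU n U l).
Proof. intros [HX Hpos]. destruct (herm_spectral n X HX) as (U & l & HU & HXU).
  exists U, l. split; [auto|split; [|auto]].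
  intros k Hk.
  assert (Hp : (exists i, (i<n)%nat /\ (fun i => U i k) i <> C0) -> 0 < re (qsum n X (fun i => U i k))) by exact (Hpos (fun i => U i k)).
  clear Hpos; rename Hp into Hpos. rewrite (qsum_meq n X _ _ HXU), qsum_UDU in Hpos.
  destruct HU as [HU1 HU2].
  rewrite (csum_delta n _ k Hk) in Hpos.
  - assert (E : csum n (fun j => Cmul (Cconj (U j k)) (U j k)) = C1).
    { transitivity (mmul n (madj U) U k k). reflexivity. rewrite HU1 by auto. unfold mid. rewrite Nat.eqb_refl. auto. }
    rewrite E in Hpos. unfold Cmul, Cconj, RtoC, C1 in Hpos; simpl in Hpos.
    assert (Hne : exists i, (i < n)%nat /\ U i k <> C0).
    { apply Classical_Prop.NNPP; intros Hn.
      assert (Hz : mmul n (madj U) U k k = C0).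
      { unfold mmul, madj. apply csum_zero. intros j Hj.
        assert (U j k = C0) by (apply Classical_Prop.NNPP; intro; apply Hn; exists j; auto).
        rewrite H. cring. }
      rewrite HU1 in Hz by auto. unfold mid in Hz. rewrite Nat.eqb_refl in Hz.
      unfold C1, C0 in Hz. injection Hz. lra. }
    specialize (Hpos Hne).
    lra.
  - intros j Hj Hjk. assert (E : csum n (fun i => Cmul (Cconj (U i j)) (U i k)) = C0).
    { transitivity (mmul n (madj U) U j k). reflexivity. rewrite HU1 by auto. unfold mid.
      destruct (Nat.eqb_spec j k). lia. auto. }
    rewrite E. cring.
Qed.


Lemma stack3_gram n X Y Z i j : (i < n)%nat -> (j < n)%nat ->
  mmul (3 * n) (madj (stack3 n X Y Z)) (stack3 n X Y Z) i j =
  madd (madd (mmul n (madj X) X) (mmul n (madj Y) Y)) (mmul n (madj Z) Z) i j.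
Proof. intros Hi Hj. unfold mmul at 1. replace (3 * n)%nat with (n + (n + n))%nat by lia.
  rewrite !csum_split.
  assert (E1 : csum n (fun k => Cmul (madj (stack3 n X Y Z) i k) (stack3 n X Y Z k j)) = mmul n (madj X) X i j).
  { apply csum_ext; intros k Hk. unfold madj, stack3. rewrite (proj2 (Nat.ltb_lt k n) Hk). auto. }
  assert (E2 : csum n (fun k => Cmul (madj (stack3 n X Y Z) i (n + k)%nat) (stack3 n X Y Z (n + k)%nat j)) = mmul n (madj Y) Y i j).
  { apply csum_ext; intros k Hk. unfold madj, stack3.
    rewrite (proj2 (Nat.ltb_ge (n + k) n)) by lia. rewrite (proj2 (Nat.ltb_lt (n + k) (2 * n))) by lia.
    replace (n + k - n)%nat with k by lia. auto. }
  assert (E3 : csum n (fun k => Cmul (madj (stack3 n X Y Z) i (n + (n + k))%nat) (stack3 n X Y Z (n + (n + k))%nat j)) = mmul n (madj Z) Z i j).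
  { apply csum_ext; intros k Hk. unfold madj, stack3.
    rewrite (proj2 (Nat.ltb_ge (n + (n + k)) n)) by lia. rewrite (proj2 (Nat.ltb_ge (n + (n + k)) (2 * n))) by lia.
    replace (n + (n + k) - 2 * n)%nat with k by lia. auto. }
  rewrite E1, E2, E3. unfold madd. cring.
Qed.

Lemma mid_adj : madj mid = mid.
Proof. rewrite <- mdiag_one, madj_mdiag. auto. Qed.

Lemma mid_unitary n : unitary n mid.
Proof. unfold unitary. rewrite mid_adj, mmul_mid_l. split; reflexivity. Qed.

Lemma UDU_mid n d : meq n (UDU n mid d) (mdiag d).
Proof. unfold UDU. rewrite mid_adj, mmul_mid_l, mmul_mid_r. reflexivity. Qed.

Lemma mpow_diag n lam r : (forall i, (i < n)%nat -> 0 < lam i) ->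
  meq n (mpow n (mdiag lam) r) (mdiag (fun i => Rpower (lam i) r)).
Proof. intros H. rewrite (mpow_spec n (mdiag lam) r mid lam (mid_unitary n) H).
  apply UDU_mid. symmetry; apply UDU_mid. Qed.

Lemma sandwich n N P Y : madj P = P -> meq n (mmul n (mmul n P Y) P) mid ->
  meq n (mmul n (mmul n (madj (mmul n P N)) Y) (mmul n P N)) (mmul n (madj N) N).
Proof. intros HP H. rewrite madj_mmul, HP.
  transitivity (mmul n (madj N) (mmul n (mmul n (mmul n P Y) P) N)).
  - apply meq_refl'. rewrite !mmul_assoc. reflexivity.
  - rewrite H, mmul_mid_l. reflexivity. Qed.

Lemma gram_sym n P A Y : madj P = P -> meq n (mmul n P P) Y ->
  meq n (mmul n (madj (mmul n P A)) (mmul n P A)) (mmul n (mmul n (madj A) Y) A).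
Proof. intros HP H. rewrite madj_mmul, HP, <- H. apply meq_refl'. rewrite !mmul_assoc. reflexivity. Qed.

Lemma rp_pos x y : 0 < Rpower x y.
Proof. unfold Rpower. apply exp_pos. Qed.

Lemma rp2 x a b c : a + b = c -> Rpower x a * Rpower x b = Rpower x c.
Proof. intros <-. rewrite Rpower_plus. auto. Qed.

Lemma rp2one x a b : 0 < x -> a + b = 0 -> Rpower x a * Rpower x b = 1.
Proof. intros Hx H. rewrite (rp2 x a b 0 H). apply Rpower_O; auto. Qed.

Lemma stack_iff n Q U lam N1 N2 : posdef n Q -> unitary n U -> (forall i, (i < n)%nat -> 0 < lam i) ->
  (col_orthonormal (3 * n) n
        (stack3 n
           (mmul n (mmul n (mpow n (mdiag lam) (1 / 2)) (madj U)) (mpow n Q (- (1 / 2))))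
           (mmul n N1 (mpow n Q (- (1 / 2))))
           (mmul n N2 (mpow n Q (- (1 / 2)))))
   <-> meq n (madd (madd (UDU n U lam) (mmul n (madj N1) N1)) (mmul n (madj N2) N2)) Q).
Proof.
  intros HQ HU Hlam.
  destruct (posdef_spectral n Q HQ) as (V & q & HV & Hq & HQV).
  set (R := mpow n Q (-(1/2))).
  assert (HR : meq n R (UDU n V (fun i => Rpower (q i) (-(1/2))))) by (apply mpow_spec; auto).
  set (S := UDU n V (fun i => Rpower (q i) (1/2))).
  assert (HSR : meq n (mmul n S R) mid).
  { rewrite HR. unfold S. rewrite UDU_mul by auto. apply UDU_one; auto. intros; apply rp2one; auto; lra. }
  assert (HRS : meq n (mmul n R S) mid).
  { rewrite HR. unfold S. rewrite UDU_mul by auto. apply UDU_one; auto. intros; apply rp2one; auto; lra. }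
  assert (HSS : meq n (mmul n S S) Q).
  { rewrite HQV. unfold S. rewrite UDU_mul by auto. apply UDU_ext. intros; cbv beta.
    rewrite (rp2 _ _ _ 1) by lra. apply Rpower_1; auto. }
  assert (HRQR : meq n (mmul n (mmul n R Q) R) mid).
  { rewrite HR, HQV, !UDU_mul by auto. apply UDU_one; auto. intros; cbv beta.
    rewrite <- (Rpower_1 (q i)) at 2 by auto. rewrite <- !Rpower_plus. replace (- (1 / 2) + 1 + - (1 / 2)) with 0 by lra. apply Rpower_O; auto. }
  assert (HRadj : meq n (madj R) R). { rewrite HR, UDU_adj. reflexivity. }
  set (K := madd (madd (UDU n U lam) (mmul n (madj N1) N1)) (mmul n (madj N2) N2)).
  assert (HL : meq n (mpow n (mdiag lam) (1/2)) (mdiag (fun i => Rpower (lam i) (1/2)))) by (apply mpow_diag; auto).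
  assert (HDD : meq n (mdiag lam) (mmul n (mdiag (fun i => Rpower (lam i) (1/2))) (mdiag (fun i => Rpower (lam i) (1/2))))).
  { rewrite mdiag_mul. apply mdiag_ext. intros; cbv beta. rewrite (rp2 _ _ _ 1) by lra. rewrite Rpower_1; auto. }
  assert (Hg : forall W, meq n (mmul n (madj (mmul n W R)) (mmul n W R)) (mmul n (mmul n R (mmul n (madj W) W)) R)).
  { intros W. rewrite madj_mmul, HRadj. apply meq_refl'. rewrite !mmul_assoc. reflexivity. }
  assert (HG0 : meq n (mmul n (madj (mmul n (mmul n (mpow n (mdiag lam) (1 / 2)) (madj U)) R))
                     (mmul n (mmul n (mpow n (mdiag lam) (1 / 2)) (madj U)) R))
                  (mmul n (mmul n R (UDU n U lam)) R)).
  { rewrite Hg. unfold UDU. rewrite HL, HDD. rewrite madj_mmul, madj_madj, madj_mdiag.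
    apply meq_refl'. rewrite !mmul_assoc. reflexivity. }
  assert (Hsum : meq n (madd (madd (mmul n (madj (mmul n (mmul n (mpow n (mdiag lam) (1 / 2)) (madj U)) R))
                     (mmul n (mmul n (mpow n (mdiag lam) (1 / 2)) (madj U)) R))
                     (mmul n (madj (mmul n N1 R)) (mmul n N1 R)))
                     (mmul n (madj (mmul n N2 R)) (mmul n N2 R)))
                 (mmul n (mmul n R K) R)).
  { rewrite HG0, !Hg. unfold K. rewrite !mmul_madd_r, !mmul_madd_l. reflexivity. }
  unfold col_orthonormal.
  assert (Hc : forall X Y Z, meq n (mmul (3 * n) (madj (stack3 n X Y Z)) (stack3 n X Y Z))
       (madd (madd (mmul n (madj X) X) (mmul n (madj Y) Y)) (mmul n (madj Z) Z))).
  { intros X Y Z i j Hi Hj. apply stack3_gram; auto. }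
  fold R. rewrite Hc, Hsum. fold K. split.
  - intro H. transitivity (mmul n (mmul n (mmul n S R) K) (mmul n R S)).
    + rewrite HSR, HRS, mmul_mid_l, mmul_mid_r. reflexivity.
    + transitivity (mmul n (mmul n S (mmul n (mmul n R K) R)) S).
      * apply meq_refl'. rewrite !mmul_assoc. reflexivity.
      * rewrite H, mmul_mid_r. exact HSS.
  - intro H. rewrite H. exact HRQR.
Qed.


Theorem mainTheorem11 (n : nat) (s t p : R) (A B Q : Mat) :
  1 <= s -> 1 <= t -> 1 <= p ->
  invertible n A -> invertible n B -> posdef n Q ->
  ((exists X : Mat, posdef n X /\
      meq n (madd (madd (mpow n X s)
                        (mmul n (mmul n (madj A) (mpow n X (- t))) A))
                  (mmul n (mmul n (madj B) (mpow n X (- p))) B)) Q)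
   <->
   (exists (U : Mat) (lam : nat -> R) (N1 N2 : Mat),
      unitary n U /\ (forall i, (i < n)%nat -> 0 < lam i) /\
      meq n A (mmul n (mpow n (mmul n (mmul n U (mdiag lam)) (madj U)) (t / (2 * s))) N1) /\
      meq n B (mmul n (mpow n (mmul n (mmul n U (mdiag lam)) (madj U)) (p / (2 * s))) N2) /\
      col_orthonormal (3 * n) n
        (stack3 n
           (mmul n (mmul n (mpow n (mdiag lam) (1 / 2)) (madj U)) (mpow n Q (- (1 / 2))))
           (mmul n N1 (mpow n Q (- (1 / 2))))
           (mmul n N2 (mpow n Q (- (1 / 2))))))).
Proof.
  intros Hs Ht Hp _ _ HQ. split.
  - intros [X [HX HE]].
    destruct (posdef_spectral n X HX) as (V & m & HV & Hm & HXV).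
    set (lam := fun i => Rpower (m i) s).
    assert (Hlam : forall i, (i < n)%nat -> 0 < lam i) by (intros; apply rp_pos).
    assert (HW : forall r, meq n (mpow n (mmul n (mmul n V (mdiag lam)) (madj V)) r)
                              (UDU n V (fun i => Rpower (lam i) r))).
    { intros r. apply mpow_spec; auto. reflexivity. }
    exists V, lam, (mmul n (UDU n V (fun i => Rpower (lam i) (-(t / (2 * s))))) A),
                   (mmul n (UDU n V (fun i => Rpower (lam i) (-(p / (2 * s))))) B).
    split; [auto | split; [auto | split; [| split]]].
    + symmetry. rewrite HW, <- mmul_assoc, UDU_mul by auto. rewrite UDU_one, mmul_mid_l; auto. reflexivity.
      intros; cbv beta. apply rp2one; auto. lra.
    + symmetry. rewrite HW, <- mmul_assoc, UDU_mul by auto. rewrite UDU_one, mmul_mid_l; auto. reflexivity.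
      intros; cbv beta. apply rp2one; auto. lra.
    + apply stack_iff; auto. rewrite <- HE. apply madd_proper; [apply madd_proper|].
      * symmetry. apply mpow_spec; auto.
      * rewrite (mpow_spec n X (- t) V m HV Hm HXV). apply gram_sym. apply UDU_adj.
        rewrite UDU_mul by auto. apply UDU_ext. intros; cbv beta. unfold lam. rewrite !Rpower_mult.
        apply rp2. field. lra.
      * rewrite (mpow_spec n X (- p) V m HV Hm HXV). apply gram_sym. apply UDU_adj.
        rewrite UDU_mul by auto. apply UDU_ext. intros; cbv beta. unfold lam. rewrite !Rpower_mult.
        apply rp2. field. lra.
  - intros (U & lam & N1 & N2 & HU & Hlam & HA & HB & Hst).
    apply stack_iff in Hst; auto.
    assert (HW : forall r, meq n (mpow n (mmul n (mmul n U (mdiag lam)) (madj U)) r)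
                              (UDU n U (fun i => Rpower (lam i) r))).
    { intros r. apply mpow_spec; auto. reflexivity. }
    set (l' := fun i => Rpower (lam i) (1 / s)).
    assert (Hl' : forall i, (i < n)%nat -> 0 < l' i) by (intros; apply rp_pos).
    assert (HX : forall r, meq n (mpow n (UDU n U l') r) (UDU n U (fun i => Rpower (l' i) r))).
    { intros r. apply mpow_spec; auto. reflexivity. }
    exists (UDU n U l'). split. apply UDU_posdef; auto.
    rewrite <- Hst. apply madd_proper; [apply madd_proper|].
    + rewrite HX. apply UDU_ext. intros i Hi; cbv beta. unfold l'. rewrite Rpower_mult.
      replace (1 / s * s) with 1 by (field; lra). apply Rpower_1; auto.
    + rewrite HX, HA, HW. apply sandwich. apply UDU_adj. rewrite !UDU_mul by auto.
      apply UDU_one; auto. intros i Hi; cbv beta. unfold l'. rewrite Rpower_mult, <- !Rpower_plus.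
      replace (t / (2 * s) + 1 / s * - t + t / (2 * s)) with 0 by (field; lra). apply Rpower_O; auto.
    + rewrite HX, HB, HW. apply sandwich. apply UDU_adj. rewrite !UDU_mul by auto.
      apply UDU_one; auto. intros i Hi; cbv beta. unfold l'. rewrite Rpower_mult, <- !Rpower_plus.
      replace (p / (2 * s) + 1 / s * - p + p / (2 * s)) with 0 by (field; lra). apply Rpower_O; auto.
Qed.
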